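(* Let $N$ be a natural number, $\delta\subseteq{}^{\underline N}2$ and $0<k<N$. Then $\mathrm{HN}(\delta)>k$ if and only if there is $\delta^*\subseteq{}^{\underline N}2$ such that $\delta\preceq\delta^*$ and the elements of $\delta^*$ have pairwise disjoint domains, each of size $k$. In particular, if there is a $k$-selector for $\delta$, then $\mathrm{HN}(\delta)\geq k+1$.
   Context: $N=\{0,\ldots,N-1\}$; ${}^{\underline N}2$ is the set of all partial functions $\sigma$ with $\mathrm{dom}(\sigma)\subseteq N$ and values in $\{0,1\}$ (the empty function included). For $\delta_1,\delta_2\subseteq{}^{\underline N}2$, $\delta_1\preceq\delta_2$ means that for every $\sigma\in\delta_1$ there is $\rho\in\delta_2$ with $\rho\subseteq\sigma$. For $\delta\subseteq{}^{\underline N}2$, $\mathrm{hn}(\delta)$ is the maximum of $k+1$ over those $k\in\{0,\ldots,N-1\}$ such that for every $\delta'\subseteq\delta$ there is $\delta''\subseteq\delta'$ whose elements have pairwise disjoint domains and $|\bigcup_{\sigma\in\delta''}\mathrm{dom}(\sigma)|\geq k|\delta'|$; and $\mathrm{HN}(\delta)=\max\{\mathrm{hn}(\delta'):\delta'\subseteq{}^{\underline N}2,\ \delta\preceq\delta'\}$. A $k$-selector for $\delta$ is a function $F$ from $\delta$ to $k$-element subsets of $N$ such that for $\sigma,\rho\in\delta$: $F(\sigma)\subseteq\mathrm{dom}(\sigma)$, and $F(\sigma)\cap F(\rho)=\emptyset$ iff $\sigma\neq\rho$. *)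

(* Defs.v *)
From mathcomp Require Import all_boot.
Set Implicit Arguments. Unset Strict Implicit. Unset Printing Implicit Defensive.

(* Partial functions sigma with dom(sigma) ⊆ N = {0..N-1} and values in {0,1}:
   a finite function 'I_N -> option bool (None = undefined). *)
Definition pfun (N : nat) := {ffun 'I_N -> option bool}.

Definition dom (N : nat) (s : pfun N) : {set 'I_N} := [set i | s i != None].

Definition subpf (N : nat) (rho sigma : pfun N) : bool :=
  [forall i, (rho i != None) ==> (sigma i == rho i)].

Definition preceq (N : nat) (d1 d2 : {set pfun N}) : bool :=
  [forall s in d1, exists r in d2, subpf r s].

Definition pw_disjoint_dom (N : nat) (d : {set pfun N}) : bool :=
  [forall s in d, forall r in d, (s != r) ==> [disjoint dom s & dom r]].

Definition hn_prop (N : nat) (d : {set pfun N}) (k : nat) : bool :=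
  [forall d' : {set pfun N}, (d' \subset d) ==>
     [exists d'' : {set pfun N}, [&& d'' \subset d', pw_disjoint_dom d'' &
        k * #|d'| <= #|\bigcup_(s in d'') dom s| ]]].

Definition hn (N : nat) (d : {set pfun N}) : nat :=
  \max_(k < N | hn_prop d k) k.+1.

Definition HN (N : nat) (d : {set pfun N}) : nat :=
  \max_(d' : {set pfun N} | preceq d d') hn d'.

(* F is a k-selector for delta (F given as a total function, only its
   restriction to delta matters) *)
Definition selector (N : nat) (k : nat) (d : {set pfun N})
    (F : pfun N -> {set 'I_N}) : Prop :=
  (forall s, s \in d -> #|F s| = k /\ F s \subset dom s) /\
  (forall s r, s \in d -> r \in d -> (F s :&: F r = set0 <-> s <> r)).

(* Main.v *)
Require Import Defs.
From mathcomp Require Import all_boot zify.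
Set Implicit Arguments. Unset Strict Implicit. Unset Printing Implicit Defensive.

Section Hall.
Variables (I T : finType) (x0 : T) (S : {set I}).

Definition hall_cond (A : I -> {set T}) : bool :=
  [forall J : {set I}, (J \subset S) ==> (#|J| <= #|\bigcup_(i in J) A i|)].

Lemma hall_ind n : forall A : I -> {set T}, \sum_(i in S) #|A i| < n -> hall_cond A ->
  exists f : I -> T, (forall i, i \in S -> f i \in A i) /\ {in S &, injective f}.
Proof.
elim: n => [|n IH] A // Hsum /forallP HA.
have HA' : forall J : {set I}, J \subset S -> #|J| <= #|\bigcup_(i in J) A i|.
  by move=> J JS; have := HA J; rewrite JS.
case: (boolP [exists i in S, 1 < #|A i|]) => [/existsP[i /andP[iS Ai2]]|].
  have [x xA] : exists x, x \in A i.
    by apply/set0Pn; rewrite -card_gt0; apply: ltnW.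
  have [y yA] : exists y, y \in A i :\ x.
    by apply/set0Pn; rewrite -card_gt0; move: Ai2; rewrite (cardsD1 x) xA.
  move: yA; rewrite !inE => /andP[yx yA].
  pose A1 := fun z => fun j => if j == i then A i :\ z else A j.
  have sumA1 : forall z, z \in A i -> \sum_(j in S) #|A1 z j| < n.
    move=> z zA; rewrite (bigD1 i) //=; move: Hsum; rewrite (bigD1 i) //=.
    have e : \sum_(j in S | j != i) #|A1 z j| = \sum_(j in S | j != i) #|A j|.
      by apply: eq_bigr => j /andP[_ /negPf h]; rewrite /A1 h.
    rewrite e /A1 eqxx (cardsD1 z (A i)) zA.
    lia.
  have subA1 : forall z j, A1 z j \subset A j.
    move=> z j; rewrite /A1; case: eqP => [->|_]; last by [].
    exact: subsetDl.
  case: (boolP (hall_cond (A1 x))) => [H1|/forallPn [J1]].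
    have [f [f1 f2]] := IH _ (sumA1 x xA) H1.
    exists f; split => // j jS; exact: (subsetP (subA1 x j)) (f1 j jS).
  rewrite negb_imply -ltnNge => /andP[J1S HJ1].
  case: (boolP (hall_cond (A1 y))) => [H1|/forallPn [J2]].
    have [f [f1 f2]] := IH _ (sumA1 y yA) H1.
    exists f; split => // j jS; exact: (subsetP (subA1 y j)) (f1 j jS).
  rewrite negb_imply -ltnNge => /andP[J2S HJ2].
  have key : forall z (J : {set I}), J \subset S -> #|\bigcup_(j in J) A1 z j| < #|J| ->
     i \in J /\ #|(A i :\ z) :|: \bigcup_(j in J :\ i) A j| < #|J|.
    move=> z J JS HJ.
    have iJ : i \in J.
      apply/negPn/negP => iJ.
      have : #|J| <= #|\bigcup_(j in J) A1 z j|.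
        rewrite (_ : \bigcup_(j in J) A1 z j = \bigcup_(j in J) A j); first exact: HA'.
        apply: eq_bigr => j jJ; rewrite /A1; case: eqP => // ji.
        by move: iJ; rewrite -ji jJ.
      lia.
    split=> //; move: HJ; rewrite (big_setD1 i iJ) /= /A1 eqxx.
    rewrite (_ : \bigcup_(j in J :\ i) (if j == i then A i :\ z else A j) =
                 \bigcup_(j in J :\ i) A j) //.
    apply: eq_bigr => j; rewrite !inE => /andP[/negPf -> _] //.
  have [iJ1 H1] := key x J1 J1S HJ1.
  have [iJ2 H2] := key y J2 J2S HJ2.
  set K1 := J1 :\ i in H1; set K2 := J2 :\ i in H2.
  set U1 := _ :|: _ in H1; set U2 := _ :|: _ in H2.
  have cJ1 : #|J1| = (#|K1|).+1 by rewrite (cardsD1 i J1) iJ1.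
  have cJ2 : #|J2| = (#|K2|).+1 by rewrite (cardsD1 i J2) iJ2.
  have KS : i |: (K1 :|: K2) \subset S.
    apply/subsetP => j; rewrite !inE => /or3P[/eqP->//|/andP[_ jJ]|/andP[_ jJ]].
    - exact: (subsetP J1S).
    - exact: (subsetP J2S).
  have KIS : K1 :&: K2 \subset S.
    apply/subsetP => j; rewrite !inE => /andP[/andP[_ jJ] _]; exact: (subsetP J1S).
  have h1 := HA' _ KS. have h2 := HA' _ KIS.
  have iK : i \notin K1 :|: K2 by rewrite !inE eqxx.
  rewrite cardsU1 iK /= in h1.
  have s1 : \bigcup_(j in i |: (K1 :|: K2)) A j \subset U1 :|: U2.
    apply/subsetP => z /bigcupP[j]; rewrite in_setU1 in_setU => /or3P[/eqP->|jK|jK] zA;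
      rewrite /U1 /U2 !in_setU.
    - case: (eqVneq z x) => [zx|zx].
        by rewrite zx !in_setD1 eq_sym yx xA ?orbT.
      by rewrite !in_setD1 zx zA.
    - by rewrite (subsetP (bigcup_sup j jK)) ?orbT.
    - by rewrite (subsetP (bigcup_sup j jK)) ?orbT.
  have s2 : \bigcup_(j in K1 :&: K2) A j \subset U1 :&: U2.
    apply/subsetP => z /bigcupP[j]; rewrite in_setI => /andP[jK1 jK2] zA.
    by rewrite /U1 /U2 in_setI !in_setU (subsetP (bigcup_sup j jK1)) ?(subsetP (bigcup_sup j jK2)) ?orbT.
  have e1 := cardsUI U1 U2. have e2 := cardsUI K1 K2.
  have := subset_leq_card s1; have := subset_leq_card s2.
  lia.
rewrite negb_exists => /forallP Hle.
have A1 : forall j, j \in S -> #|A j| = 1.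
  move=> j jS; have := Hle j; rewrite jS /= -leqNgt => h.
  have := HA' [set j]; rewrite sub1set jS cards1 big_set1 => /(_ isT); lia.
pose f j := odflt x0 [pick z in A j].
have fA : forall j, j \in S -> A j = [set f j].
  move=> j jS; have /cards1P[a Ha] : #|A j| == 1 by rewrite A1.
  rewrite /f Ha; case: pickP => [z /=|]; first by rewrite inE => /eqP ->.
  by move=> /(_ a); rewrite inE eqxx.
exists f; split.
  by move=> j jS; rewrite fA // inE.
move=> j j' jS j'S fj; apply/eqP/negPn/negP => jj.
have := HA' [set j; j']; rewrite subUset !sub1set jS j'S cards2 jj /=.
rewrite big_setU1 /= ?inE // big_set1 fA // fA // fj setUid cards1 => /(_ isT).
by [].
Qed.
End Hall.

Lemma disjP (T : finType) (A B : {set T}) :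
  (forall x, x \in A -> x \in B -> False) -> [disjoint A & B].
Proof.
move=> H; rewrite disjoints_subset; apply/subsetP => x xA; rewrite inE.
by apply/negP => xB; exact: (H x xA xB).
Qed.

Lemma khall (I T : finType) (x0 : T) (D : {set I}) (k : nat) (A : I -> {set T}) :
  (forall J : {set I}, J \subset D -> k * #|J| <= #|\bigcup_(i in J) A i|) ->
  exists B : I -> {set T},
    (forall i, i \in D -> #|B i| = k /\ B i \subset A i) /\
    (forall i j, i \in D -> j \in D -> i != j -> [disjoint B i & B j]).
Proof.
move=> HA.
pose S := setX D [set: 'I_k].
pose A' := fun p : I * 'I_k => A p.1.
have HC : hall_cond S A'.
  apply/forallP => J; apply/implyP => JS.
  pose J0 := [set p.1 | p in J].
  have J0D : J0 \subset D.
    apply/subsetP => i /imsetP[p pJ ->].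
    by have := subsetP JS p pJ; rewrite inE => /andP[].
  have c1 : #|J| <= #|J0| * k.
    have -> : #|J0| * k = #|setX J0 [set: 'I_k]| by rewrite cardsX cardsT card_ord.
    apply: subset_leq_card; apply/subsetP => p pJ; rewrite inE; apply/andP; split => //.
    by apply/imsetP; exists p.
  have c2 : \bigcup_(i in J0) A i \subset \bigcup_(p in J) A' p.
    apply/subsetP => z /bigcupP[i /imsetP[p pJ ->] zA].
    by apply/bigcupP; exists p.
  have := HA J0 J0D; have := subset_leq_card c2; rewrite mulnC; lia.
have [f [fA finj]] := hall_ind x0 (n := (\sum_(p in S) #|A' p|).+1) (leqnn _) HC.
exists (fun i => [set f (i, t) | t : 'I_k]); split.
  move=> i iD; split.
    rewrite card_in_imset ?cardsT ?card_ord //.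
    move=> t t' _ _ /finj; rewrite !inE iD => /(_ isT isT) [].
    done.
  apply/subsetP => z /imsetP[t _ ->]; have := fA (i, t); rewrite !inE iD; exact.
move=> i j iD jD ij; apply: disjP => z /imsetP[t _ ->] /imsetP[t' _].
move=> /finj; rewrite !inE iD jD => /(_ isT isT) [] e _.
by move: ij; rewrite e eqxx.
Qed.

Lemma card_bigcup_disj (I T : finType) (D : {set I}) (F : I -> {set T}) :
  (forall i j, i \in D -> j \in D -> i != j -> [disjoint F i & F j]) ->
  #|\bigcup_(i in D) F i| = \sum_(i in D) #|F i|.
Proof.
move Hn : #|D| => n; elim: n D Hn => [|n IH] D Hn Hd.
  move/eqP: Hn; rewrite cards_eq0 => /eqP ->.
  by rewrite big_set0 big_set0 cards0.
have [a aD] : exists a, a \in D by apply/set0Pn; rewrite -card_gt0 Hn.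
rewrite (big_setD1 a aD) /= (big_setD1 a aD) /=.
have Hd' : forall i j, i \in D :\ a -> j \in D :\ a -> i != j -> [disjoint F i & F j].
  by move=> i j; rewrite !in_setD1 => /andP[_ iD] /andP[_ jD]; apply: Hd.
rewrite -(IH (D :\ a)) //; last by move: Hn; rewrite (cardsD1 a D) aD; case.
rewrite cardsU.
suff -> : F a :&: \bigcup_(i in D :\ a) F i = set0 by rewrite cards0 subn0.
apply: disjoint_setI0; apply: disjP => z za /bigcupP[j]; rewrite in_setD1 => /andP[ja jD] zj.
have := Hd a j aD jD; rewrite eq_sym ja => /(_ isT) /disjointFr /(_ za).
by rewrite zj.
Qed.

Section Main.
Variable N : nat.

Lemma hn_prop_mono (d : {set pfun N}) j k : k <= j -> hn_prop d j -> hn_prop d k.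
Proof.
move=> kj /forallP H; apply/forallP => d'; apply/implyP => sd.
have /existsP[d'' /and3P[h1 h2 h3]] := implyP (H d') sd.
apply/existsP; exists d''; rewrite h1 h2 /=.
apply: leq_trans h3; exact: leq_mul.
Qed.

Lemma hn_ge (d : {set pfun N}) k : k < N -> hn_prop d k -> k < hn d.
Proof.
move=> kN H; rewrite /hn.
exact: (leq_bigmax_cond (P := fun j : 'I_N => hn_prop d j) (F := fun j : 'I_N => (nat_of_ord j).+1) (Ordinal kN) H).
Qed.

Lemma hn_lt (d : {set pfun N}) k : k < hn d -> hn_prop d k.
Proof.
move=> H; apply/negPn/negP => Hn.
move: H; rewrite ltnNge => /negP; apply; apply/bigmax_leqP => j Hj.
rewrite ltnNge; apply/negP => kj.
by move/negP: Hn; apply; apply: (hn_prop_mono kj).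
Qed.

Lemma HN_lt (delta : {set pfun N}) k :
  k < HN delta -> exists d', preceq delta d' /\ k < hn d'.
Proof.
move=> H; case: (boolP [exists d', preceq delta d' && (k < hn d')]).
  by move=> /existsP[d' /andP[h1 h2]]; exists d'.
rewrite negb_exists => /forallP Hn.
move: H; rewrite ltnNge => /negP H; exfalso; apply: H; apply/bigmax_leqP => d' Hd'.
by have := Hn d'; rewrite Hd' /= -leqNgt.
Qed.

Lemma HN_ge (delta d' : {set pfun N}) : preceq delta d' -> hn d' <= HN delta.
Proof.
move=> H; exact: (leq_bigmax_cond (P := fun d => preceq delta d) (F := fun d => hn d) d' H).
Qed.

Definition res (s : pfun N) (B : {set 'I_N}) : pfun N :=
  [ffun i => if i \in B then s i else None].

Lemma dom_res s (B : {set 'I_N}) : B \subset dom s -> dom (res s B) = B.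
Proof.
move=> /subsetP sB; apply/setP => i; rewrite /dom !inE ffunE.
case: (boolP (i \in B)) => iB; last by rewrite eqxx.
by have := sB i iB; rewrite inE.
Qed.

Lemma subpf_res s (B : {set 'I_N}) : subpf (res s B) s.
Proof.
apply/forallP => i; apply/implyP; rewrite ffunE; case: (i \in B) => //.
Qed.

Lemma subpf_trans (a b c : pfun N) : subpf a b -> subpf b c -> subpf a c.
Proof.
move=> /forallP H1 /forallP H2; apply/forallP => i; apply/implyP => ai.
have /eqP e1 := implyP (H1 i) ai.
have bi : b i != None by rewrite e1.
by have /eqP e2 := implyP (H2 i) bi; rewrite e2 e1.
Qed.

Lemma back (delta dstar : {set pfun N}) k : k < N ->
  preceq delta dstar -> pw_disjoint_dom dstar ->
  (forall s, s \in dstar -> #|dom s| = k) -> k < HN delta.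
Proof.
move=> kN Hp Hd Hk; apply: leq_trans (HN_ge Hp); apply: hn_ge => //.
apply/forallP => d'; apply/implyP => sd; apply/existsP; exists d'.
rewrite subxx /=.
have Hd' : forall s r, s \in d' -> r \in d' -> s != r -> [disjoint dom s & dom r].
  move=> s r sd' rd' sr.
  have := forallP Hd s; rewrite (subsetP sd s sd') /= => /forallP /(_ r).
  by rewrite (subsetP sd r rd') sr.
apply/andP; split.
  apply/forallP => s; apply/implyP => sd'; apply/forallP => r; apply/implyP => rd'.
  by apply/implyP; apply: Hd'.
rewrite card_bigcup_disj // (eq_bigr (fun _ => k)); last by move=> s sd'; apply: Hk; exact: (subsetP sd).
by rewrite sum_nat_const mulnC.
Qed.

End Main.

Theorem proposition6p14 (N : nat) (delta : {set pfun N}) (k : nat) :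
  0 < k < N ->
  (k < HN delta <->
     exists dstar : {set pfun N},
       [/\ preceq delta dstar, pw_disjoint_dom dstar &
           forall s, s \in dstar -> #|dom s| = k]) /\
  ((exists F : pfun N -> {set 'I_N}, selector k delta F) -> k.+1 <= HN delta).
Proof.
move=> /andP[k0 kN].
have N0 : 0 < N by apply: leq_ltn_trans kN.
have part1 : k < HN delta <->
     exists dstar : {set pfun N},
       [/\ preceq delta dstar, pw_disjoint_dom dstar &
           forall s, s \in dstar -> #|dom s| = k].
  split; last by move=> [dstar [h1 h2 h3]]; exact: (back kN h1 h2 h3).
  move=> /HN_lt [d' [Hp /hn_lt Hh]].
  have HA : forall J : {set pfun N}, J \subset d' -> k * #|J| <= #|\bigcup_(i in J) dom i|.
    move=> J Jd; have /existsP[d'' /and3P[h1 h2 h3]] := implyP (forallP Hh J) Jd.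
    apply: leq_trans h3 _; apply: subset_leq_card; apply/subsetP => z /bigcupP[s sd zs].
    by apply/bigcupP; exists s => //; exact: (subsetP h1).
  have [B [HB1 HB2]] := khall (Ordinal N0) HA.
  exists [set res r (B r) | r in d']; split.
  - apply/forallP => s; apply/implyP => sD.
    have /existsP[r /andP[rd rs]] := implyP (forallP Hp s) sD.
    apply/existsP; exists (res r (B r)); apply/andP; split; first by apply/imsetP; exists r.
    exact: subpf_trans (subpf_res _ _) rs.
  - apply/forallP => s; apply/implyP => /imsetP[a ad ->].
    apply/forallP => r; apply/implyP => /imsetP[b bd ->].
    apply/implyP => ne.
    have [ka sa] := HB1 a ad; have [kb sb] := HB1 b bd.
    rewrite !dom_res //; apply: HB2 => //.
    by apply/negP => /eqP e; move: ne; rewrite e eqxx.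
  - move=> s /imsetP[a ad ->]; have [ka sa] := HB1 a ad.
    by rewrite dom_res.
split => //.
move=> [F [HF1 HF2]]; apply/part1.
exists [set res s (F s) | s in delta]; split.
- apply/forallP => s; apply/implyP => sD.
  apply/existsP; exists (res s (F s)); apply/andP; split; first by apply/imsetP; exists s.
  exact: subpf_res.
- apply/forallP => s; apply/implyP => /imsetP[a ad ->].
  apply/forallP => r; apply/implyP => /imsetP[b bd ->].
  apply/implyP => ne.
  have [ka sa] := HF1 a ad; have [kb sb] := HF1 b bd.
  rewrite !dom_res // -setI_eq0; apply/eqP; apply/(HF2 a b ad bd).
  by move=> e; move: ne; rewrite e eqxx.
- move=> s /imsetP[a ad ->]; have [ka sa] := HF1 a ad.
  by rewrite dom_res.
Qed.
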